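(* Let $(X,d)$ be a totally bounded metric space with II-modulus of total boundedness $\gamma$, let $\emptyset\ne F\subseteq X$ with a representation $(\tilde F_k)$, and let $G,H:\mathbb{R}_+\to\mathbb{R}_+$ have a $G$-modulus $\alpha_G$ and an $H$-modulus $\beta_H$. Let $(x_n)$ be a sequence in $X$ such that (1) $(x_n)$ is uniformly $(G,H)$-Fej\'er monotone w.r.t. $F$ with modulus $\chi$, and (2) $(x_n)$ has approximate $F$-points with $\Phi$ an approximate $F$-point bound. Then $(x_n)$ is Cauchy and, moreover, for all $k\in\mathbb{N}$ and all $g:\mathbb{N}\to\mathbb{N}$ there exists $N\le\Psi(k,g,\Phi,\chi,\alpha_G,\beta_H,\gamma)$ such that $d(x_i,x_j)\le\frac1{k+1}$ for all $i,j\in[N,N+g(N)]$, where $\Psi(k,g,\Phi,\chi,\alpha_G,\beta_H,\gamma):=\Psi_0(P)$ with $P:=\gamma(\alpha_G(2\beta_H(2k+1)+1))$, $\chi_g(n,r):=\chi(n,g(n),r)$, $\chi_g^M(n,r):=\max\{\chi_g(i,r)\mid i\le n\}$, and $$\Psi_0(0):=0,\qquad \Psi_0(n+1):=\Phi\Big(\chi_g^M\big(\Psi_0(n),\,2\beta_H(2k+1)+1\big)\Big).$$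
   Context: $\mathbb{N}$ includes $0$; $\mathbb{R}_+$ the nonnegative reals. A II-modulus of total boundedness for $X$ is $\gamma:\mathbb{N}\to\mathbb{N}$ such that for every $k$ and every sequence $(y_n)$ in $X$ there are $0\le i<j\le\gamma(k)$ with $d(y_i,y_j)\le\frac1{k+1}$. A representation of $F$ is a family of sets $\tilde F_k\subseteq X$ with $F=\bigcap_k\tilde F_k$; $AF_k:=\bigcap_{l\le k}\tilde F_l$. A $G$-modulus is $\alpha_G:\mathbb{N}\to\mathbb{N}$ with: for all $k$ and $a\in\mathbb{R}_+$, $a\le\frac1{\alpha_G(k)+1}$ implies $G(a)\le\frac1{k+1}$. An $H$-modulus is $\beta_H:\mathbb{N}\to\mathbb{N}$ with: for all $k$ and $a\in\mathbb{R}_+$, $H(a)\le\frac1{\beta_H(k)+1}$ implies $a\le\frac1{k+1}$. $(x_n)$ is uniformly $(G,H)$-Fej\'er monotone w.r.t. $F$ with modulus $\chi:\mathbb{N}^3\to\mathbb{N}$ if for all $r,n,m\in\mathbb{N}$ and all $p\in X$ with $p\in AF_{\chi(n,m,r)}$ one has $H(d(x_{n+l},p))<G(d(x_n,p))+\frac1{r+1}$ for all $l\le m$. $(x_n)$ has approximate $F$-points if for every $k$ some $x_N\in AF_k$; an approximate $F$-point bound is a monotone nondecreasing $\Phi:\mathbb{N}\to\mathbb{N}$ such that for every $k$ there is $N\le\Phi(k)$ with $x_N\in AF_k$ (the paper assumes throughout that approximate $F$-point bounds are nondecreasing). *)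

(* Defs.v *)
From Stdlib Require Import Reals Lra Lia Arith.
Open Scope R_scope.

Definition II_modulus (X : Metric_Space) (gamma : nat -> nat) : Prop :=
  forall (k : nat) (y : nat -> Base X),
    exists i j : nat, (i < j)%nat /\ (j <= gamma k)%nat /\
      dist X (y i) (y j) <= 1 / (INR k + 1).

Definition AF {X : Type} (Ft : nat -> X -> Prop) (k : nat) (p : X) : Prop :=
  forall l : nat, (l <= k)%nat -> Ft l p.

Definition Fset {X : Type} (Ft : nat -> X -> Prop) (p : X) : Prop :=
  forall k : nat, Ft k p.

Definition G_modulus (G : R -> R) (alphaG : nat -> nat) : Prop :=
  forall (k : nat) (a : R), 0 <= a ->
    a <= 1 / (INR (alphaG k) + 1) -> G a <= 1 / (INR k + 1).

Definition H_modulus (H : R -> R) (betaH : nat -> nat) : Prop :=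
  forall (k : nat) (a : R), 0 <= a ->
    H a <= 1 / (INR (betaH k) + 1) -> a <= 1 / (INR k + 1).

Definition unif_GH_Fejer (X : Metric_Space) (G H : R -> R)
    (Ft : nat -> Base X -> Prop) (x : nat -> Base X)
    (chi : nat -> nat -> nat -> nat) : Prop :=
  forall (r n m : nat) (p : Base X), AF Ft (chi n m r) p ->
    forall l : nat, (l <= m)%nat ->
      H (dist X (x (n + l)%nat) p) < G (dist X (x n) p) + 1 / (INR r + 1).

Definition approx_F_point_bound {X : Type} (Ft : nat -> X -> Prop)
    (x : nat -> X) (Phi : nat -> nat) : Prop :=
  (forall a b : nat, (a <= b)%nat -> (Phi a <= Phi b)%nat) /\
  (forall k : nat, exists N : nat, (N <= Phi k)%nat /\ AF Ft k (x N)).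

Definition Cauchy_seq (X : Metric_Space) (x : nat -> Base X) : Prop :=
  forall eps : R, eps > 0 -> exists N : nat,
    forall n m : nat, (n >= N)%nat -> (m >= N)%nat -> dist X (x n) (x m) < eps.

Fixpoint max_upto (f : nat -> nat) (n : nat) : nat :=
  match n with
  | O => f O
  | S n' => Nat.max (max_upto f n') (f (S n'))
  end.

Definition chiM (chi : nat -> nat -> nat -> nat) (g : nat -> nat) (n r : nat) : nat :=
  max_upto (fun i => chi i (g i) r) n.

Fixpoint Psi0 (k : nat) (g : nat -> nat) (Phi : nat -> nat)
    (chi : nat -> nat -> nat -> nat) (betaH : nat -> nat) (n : nat) : nat :=
  match n with
  | O => O
  | S n' => Phi (chiM chi g (Psi0 k g Phi chi betaH n') (2 * betaH (2 * k + 1) + 1)%nat)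
  end.

Definition Psi (k : nat) (g : nat -> nat) (Phi : nat -> nat)
    (chi : nat -> nat -> nat -> nat) (alphaG betaH gamma : nat -> nat) : nat :=
  Psi0 k g Phi chi betaH (gamma (alphaG (2 * betaH (2 * k + 1) + 1)%nat)).

(* Main.v *)
Require Import Defs.
From Stdlib Require Import Reals Lra Lia Arith ClassicalEpsilon Classical.
Open Scope R_scope.

Lemma max_upto_ge f n i : (i <= n)%nat -> (f i <= max_upto f n)%nat.
Proof.
  induction n; intros H; simpl.
  - assert (i = 0%nat) by lia; subst; lia.
  - destruct (Nat.eq_dec i (S n)). subst; lia.
    assert (i <= n)%nat by lia. specialize (IHn H0). lia.
Qed.

Lemma max_upto_mono f a b : (a <= b)%nat -> (max_upto f a <= max_upto f b)%nat.
Proof.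
  induction 1; simpl; lia.
Qed.

Lemma Psi0_mono k g Phi chi betaH :
  (forall a b : nat, (a <= b)%nat -> (Phi a <= Phi b)%nat) ->
  forall n m, (n <= m)%nat -> (Psi0 k g Phi chi betaH n <= Psi0 k g Phi chi betaH m)%nat.
Proof.
  intros HP.
  assert (Hs : forall n, (Psi0 k g Phi chi betaH n <= Psi0 k g Phi chi betaH (S n))%nat).
  { induction n; simpl. lia. apply HP. unfold chiM. apply max_upto_mono.
    simpl in IHn. exact IHn. }
  intros n m H; induction H. lia. specialize (Hs m). lia.
Qed.

Lemma AF_mono {T} (Ft : nat -> T -> Prop) a b p : (a <= b)%nat -> AF Ft b p -> AF Ft a p.
Proof. intros H Hb l Hl. apply Hb. lia. Qed.

Lemma meta (X : Metric_Space) (gamma : nat -> nat)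
    (Ft : nat -> Base X -> Prop) (G H : R -> R) (alphaG betaH : nat -> nat)
    (chi : nat -> nat -> nat -> nat) (Phi : nat -> nat) (x : nat -> Base X) :
  II_modulus X gamma ->
  G_modulus G alphaG ->
  H_modulus H betaH ->
  unif_GH_Fejer X G H Ft x chi ->
  approx_F_point_bound Ft x Phi ->
  (forall (k : nat) (g : nat -> nat),
     exists N : nat, (N <= Psi k g Phi chi alphaG betaH gamma)%nat /\
       forall i j : nat, (N <= i <= N + g N)%nat -> (N <= j <= N + g N)%nat ->
         dist X (x i) (x j) <= 1 / (INR k + 1)).
Proof.
  intros HII HG HH HF [HPm HPe] k g.
  set (r := (2 * betaH (2 * k + 1) + 1)%nat).
  set (a := Psi0 k g Phi chi betaH).
  assert (Hex : forall n, exists M, (M <= a (S n))%nat /\ AF Ft (chiM chi g (a n) r) (x M)).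
  { intros n. destruct (HPe (chiM chi g (a n) r)) as [M HM]. exists M. exact HM. }
  set (Mf := fun n => proj1_sig (constructive_indefinite_description _ (Hex n))).
  assert (HMf : forall n, (Mf n <= a (S n))%nat /\ AF Ft (chiM chi g (a n) r) (x (Mf n))).
  { intros n. unfold Mf. destruct (constructive_indefinite_description _ (Hex n)); simpl; auto. }
  destruct (HII (alphaG r) (fun n => x (Mf n))) as [i [j [Hij [Hjg Hd]]]].
  exists (Mf i). split.
  - unfold Psi. fold r. fold a.
    destruct (HMf i) as [H1 _].
    pose proof (Psi0_mono k g Phi chi betaH HPm (S i) (gamma (alphaG r))) as H2.
    fold a in H2. lia.
  - set (N := Mf i). set (p := x (Mf j)).
    assert (HAF : AF Ft (chi N (g N) r) p).
    { destruct (HMf j) as [_ Hj]. apply (AF_mono Ft _ (chiM chi g (a j) r)); auto.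
      unfold chiM. apply (max_upto_ge (fun i0 => chi i0 (g i0) r)).
      destruct (HMf i) as [H1 _].
      pose proof (Psi0_mono k g Phi chi betaH HPm (S i) j) as H2. fold a in H2.
      unfold N. lia. }
    assert (Hdp : dist X (x N) p <= 1 / (INR (alphaG r) + 1)) by exact Hd.
    assert (Hb : forall l, (l <= g N)%nat -> dist X (x (N + l)%nat) p <= 1 / (INR (2*k+1)%nat + 1)).
    { intros l Hl. apply HH. pose proof (dist_pos X (x (N+l)%nat) p); lra.
      pose proof (HF r N (g N) p HAF l Hl) as Hf.
      pose proof (HG r (dist X (x N) p) ltac:(pose proof (dist_pos X (x N) p); lra) Hdp) as Hg.
      assert (E : INR r + 1 = 2 * (INR (betaH (2*k+1)%nat) + 1)).
      { unfold r. rewrite plus_INR, mult_INR. simpl. lra. }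
      rewrite E in Hf, Hg.
      assert (0 < INR (betaH (2*k+1)%nat) + 1) by (pose proof (pos_INR (betaH (2*k+1)%nat)); lra).
      replace (1 / (INR (betaH (2 * k + 1)%nat) + 1)) with
        (1 / (2 * (INR (betaH (2 * k + 1)%nat) + 1)) + 1 / (2 * (INR (betaH (2 * k + 1)%nat) + 1)))
        by (field; lra).
      lra. }
    intros i0 j0 Hi Hj.
    assert (Ei : x i0 = x (N + (i0 - N))%nat) by (f_equal; lia).
    assert (Ej : x j0 = x (N + (j0 - N))%nat) by (f_equal; lia).
    pose proof (Hb (i0 - N)%nat ltac:(lia)) as B1.
    pose proof (Hb (j0 - N)%nat ltac:(lia)) as B2.
    rewrite <- Ei in B1. rewrite <- Ej in B2.
    pose proof (dist_tri X (x i0) (x j0) p) as T. rewrite (dist_sym X p (x j0)) in T.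
    assert (E : INR (2*k+1)%nat + 1 = 2 * (INR k + 1)).
    { rewrite plus_INR, mult_INR. simpl. lra. }
    rewrite E in B1, B2.
    assert (0 < INR k + 1) by (pose proof (pos_INR k); lra).
    replace (1 / (INR k + 1)) with (1 / (2 * (INR k + 1)) + 1 / (2 * (INR k + 1))) by (field; lra).
    lra.
Qed.

Theorem theorem5p1 (X : Metric_Space) (gamma : nat -> nat)
    (Ft : nat -> Base X -> Prop) (G H : R -> R) (alphaG betaH : nat -> nat)
    (chi : nat -> nat -> nat -> nat) (Phi : nat -> nat) (x : nat -> Base X) :
  II_modulus X gamma ->
  (exists p : Base X, Fset Ft p) ->
  (forall a : R, 0 <= a -> 0 <= G a) ->
  (forall a : R, 0 <= a -> 0 <= H a) ->
  G_modulus G alphaG ->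
  H_modulus H betaH ->
  unif_GH_Fejer X G H Ft x chi ->
  approx_F_point_bound Ft x Phi ->
  Cauchy_seq X x /\
  (forall (k : nat) (g : nat -> nat),
     exists N : nat, (N <= Psi k g Phi chi alphaG betaH gamma)%nat /\
       forall i j : nat, (N <= i <= N + g N)%nat -> (N <= j <= N + g N)%nat ->
         dist X (x i) (x j) <= 1 / (INR k + 1)).
Proof.
  intros HII _ _ _ HG HH HF HP.
  pose proof (meta X gamma Ft G H alphaG betaH chi Phi x HII HG HH HF HP) as HM.
  split; [|exact HM].
  intros eps Heps. apply NNPP; intros Hn.
  assert (Hw : forall N, exists nm : nat * nat, (fst nm >= N)%nat /\ (snd nm >= N)%nat /\
     ~ dist X (x (fst nm)) (x (snd nm)) < eps).
  { intros N. apply NNPP; intros Hc. apply Hn. exists N. intros n m Hn1 Hm1.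
    apply NNPP; intros Hd. apply Hc. exists (n, m). simpl. auto. }
  set (w := fun N => proj1_sig (constructive_indefinite_description _ (Hw N))).
  assert (Hwp : forall N, (fst (w N) >= N)%nat /\ (snd (w N) >= N)%nat /\
     ~ dist X (x (fst (w N))) (x (snd (w N))) < eps).
  { intros N. unfold w. destruct (constructive_indefinite_description _ (Hw N)); simpl; auto. }
  destruct (archimed_cor1 eps Heps) as [k [Hk Hk0]].
  destruct (HM k (fun N => (fst (w N) + snd (w N))%nat)) as [N [_ HN]].
  destruct (Hwp N) as [H1 [H2 H3]].
  apply H3.
  pose proof (HN (fst (w N)) (snd (w N)) ltac:(lia) ltac:(lia)) as D.
  assert (0 < INR k) by (apply lt_0_INR; lia).
  assert (1 / (INR k + 1) < / INR k).
  { unfold Rdiv. rewrite Rmult_1_l. apply Rinv_lt_contravar; nra. }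
  lra.
Qed.
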